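(* Let $a,c,d\in\mathbb{H}$ and $b\in\mathrm{Im}\,\mathbb{H}$, and let $$X=\begin{bmatrix}0&a&0\\-\bar a&b&0\\0&0&0\end{bmatrix},\qquad Y=\begin{bmatrix}0&0&c\\0&0&d\\-\bar c&-\bar d&0\end{bmatrix}\in\mathfrak{sp}(3),$$ and assume $X$ and $Y$ are linearly independent over $\mathbb{R}$. Then $[X,Y]=0$ if and only if $a=d=0$.
   Context: $\mathbb{H}$ denotes the quaternions, $\mathrm{Im}\,\mathbb{H}$ the purely imaginary quaternions, and $[X,Y]=XY-YX$. *)

(* Defs.v *)
From mathcomp Require Import all_boot all_order all_algebra.
From mathcomp Require Import reals.
Set Implicit Arguments. Unset Strict Implicit. Unset Printing Implicit Defensive.
Import GRing.Theory Num.Theory.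
Local Open Scope ring_scope.

(* Quaternions over the reals R : realType, q = q0 + q1 i + q2 j + q3 k. *)
Record quat (R : realType) := Quat { q0 : R; q1 : R; q2 : R; q3 : R }.
Arguments Quat {R}.

Section Quat.
Variable R : realType.
Definition qzero : quat R := Quat 0 0 0 0.
Definition qadd (p q : quat R) : quat R :=
  Quat (q0 p + q0 q) (q1 p + q1 q) (q2 p + q2 q) (q3 p + q3 q).
Definition qopp (p : quat R) : quat R := Quat (- q0 p) (- q1 p) (- q2 p) (- q3 p).
Definition qscale (r : R) (p : quat R) : quat R :=
  Quat (r * q0 p) (r * q1 p) (r * q2 p) (r * q3 p).
Definition qmul (p q : quat R) : quat R :=
  Quat (q0 p * q0 q - q1 p * q1 q - q2 p * q2 q - q3 p * q3 q)
       (q0 p * q1 q + q1 p * q0 q + q2 p * q3 q - q3 p * q2 q)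
       (q0 p * q2 q - q1 p * q3 q + q2 p * q0 q + q3 p * q1 q)
       (q0 p * q3 q + q1 p * q2 q - q2 p * q1 q + q3 p * q0 q).
Definition qconj (p : quat R) : quat R := Quat (q0 p) (- q1 p) (- q2 p) (- q3 p).
Definition is_imag (p : quat R) : Prop := q0 p = 0.

Definition qmat := 'I_3 -> 'I_3 -> quat R.
Definition qmat_mul (A B : qmat) : qmat :=
  fun i j => \big[qadd/qzero]_(k < 3) qmul (A i k) (B k j).
Definition qmat_sub (A B : qmat) : qmat := fun i j => qadd (A i j) (qopp (B i j)).
Definition qbracket (A B : qmat) : qmat := qmat_sub (qmat_mul A B) (qmat_mul B A).
Definition qmat_zero : qmat := fun _ _ => qzero.
Definition qmat_lin_indep (A B : qmat) : Prop :=
  forall r s : R, (fun i j => qadd (qscale r (A i j)) (qscale s (B i j))) = qmat_zero ->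
    r = 0 /\ s = 0.

Definition matX (a b : quat R) : qmat := fun i j =>
  match nat_of_ord i, nat_of_ord j with
  | 0%N, 1%N => a
  | 1%N, 0%N => qopp (qconj a)
  | 1%N, 1%N => b
  | _, _ => qzero
  end.
Definition matY (c d : quat R) : qmat := fun i j =>
  match nat_of_ord i, nat_of_ord j with
  | 0%N, 2%N => c
  | 1%N, 2%N => d
  | 2%N, 0%N => qopp (qconj c)
  | 2%N, 1%N => qopp (qconj d)
  | _, _ => qzero
  end.
End Quat.

(* Main.v *)
Require Import Defs.
From mathcomp Require Import all_boot all_order all_algebra.
From mathcomp Require Import reals.
From mathcomp Require Import ring lra.
From Stdlib Require Import FunctionalExtensionality.
Import Order.TTheory GRing.Theory Num.Theory.
Local Open Scope ring_scope.

Section H.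
Variable R : realType.

Lemma quat_eq (p q : quat R) : q0 p = q0 q -> q1 p = q1 q -> q2 p = q2 q -> q3 p = q3 q -> p = q.
Proof. by case: p; case: q => /= ? ? ? ? ? ? ? ? -> -> -> ->. Qed.

Lemma sq4_eq0 (x y z w : R) : x^+2 + y^+2 + z^+2 + w^+2 = 0 -> x = 0 /\ y = 0 /\ z = 0 /\ w = 0.
Proof.
move=> h.
have gx := sqr_ge0 x; have gy := sqr_ge0 y; have gz := sqr_ge0 z; have gw := sqr_ge0 w.
have hx : x^+2 = 0 by lra.
have hy : y^+2 = 0 by lra.
have hz : z^+2 = 0 by lra.
have hw : w^+2 = 0 by lra.
move: hx hy hz hw => /eqP; rewrite sqrf_eq0 => /eqP -> /eqP; rewrite sqrf_eq0 => /eqP ->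
  /eqP; rewrite sqrf_eq0 => /eqP -> /eqP; rewrite sqrf_eq0 => /eqP ->.
by [].
Qed.

Definition qn (p : quat R) := q0 p ^+ 2 + q1 p ^+ 2 + q2 p ^+ 2 + q3 p ^+ 2.

Lemma qn_mul p q : qn (qmul p q) = qn p * qn q.
Proof. rewrite /qn /=; ring. Qed.

Lemma qn0 p : qn p = 0 -> p = qzero R.
Proof. by move=> /sq4_eq0 [h0 [h1 [h2 h3]]]; apply: quat_eq. Qed.

Lemma qmul_eq0 p q : qmul p q = qzero R -> p = qzero R \/ q = qzero R.
Proof.
move=> h; have : qn (qmul p q) = 0 by rewrite h /qn /=; ring.
rewrite qn_mul => /eqP; rewrite mulf_eq0 => /orP [] /eqP /qn0; tauto.
Qed.

End H.

Theorem proposition3p1 (R : realType) (a b c d : quat R) :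
  is_imag b ->
  qmat_lin_indep (matX a b) (matY c d) ->
  (qbracket (matX a b) (matY c d) = @qmat_zero R <-> (a = @qzero R /\ d = @qzero R)).
Proof.
move=> hb hli; split.
- move=> H.
  have e02 := congr1 (fun M => M (@Ordinal 3 0 isT) (@Ordinal 3 2 isT)) H.
  have e12 := congr1 (fun M => M (@Ordinal 3 1 isT) (@Ordinal 3 2 isT)) H.
  move: e02 e12; rewrite /qbracket /qmat_sub /qmat_mul /qmat_zero !big_ord_recl big_ord0 /=.
  move=> e02 e12.
  have ad : qmul a d = qzero R.
    move: (congr1 (@q0 R) e02) (congr1 (@q1 R) e02) (congr1 (@q2 R) e02) (congr1 (@q3 R) e02) => /=.
    rewrite /matX /matY /=.
    move=> h0 h1 h2 h3; apply: quat_eq => /=.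
    - by apply: eq_trans _ h0; ring.
    - by apply: eq_trans _ h1; ring.
    - by apply: eq_trans _ h2; ring.
    - by apply: eq_trans _ h3; ring.
  have e2 : qadd (qmul (qopp (qconj a)) c) (qmul b d) = qzero R.
    move: (congr1 (@q0 R) e12) (congr1 (@q1 R) e12) (congr1 (@q2 R) e12) (congr1 (@q3 R) e12) => /=.
    rewrite /matX /matY /=.
    move=> h0 h1 h2 h3; apply: quat_eq => /=.
    - by apply: eq_trans _ h0; ring.
    - by apply: eq_trans _ h1; ring.
    - by apply: eq_trans _ h2; ring.
    - by apply: eq_trans _ h3; ring.
  case: (@qmul_eq0 R _ _ ad) => [a0|d0].
  + subst a.
    have bd : qmul b d = qzero R.
      move: (congr1 (@q0 R) e2) (congr1 (@q1 R) e2) (congr1 (@q2 R) e2) (congr1 (@q3 R) e2) => /=.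
      move=> h0 h1 h2 h3; apply: quat_eq => /=.
      - by apply: eq_trans _ h0; ring.
      - by apply: eq_trans _ h1; ring.
      - by apply: eq_trans _ h2; ring.
      - by apply: eq_trans _ h3; ring.
    case: (@qmul_eq0 R _ _ bd) => [b0|d0]; last by [].
    subst b.
    have [] := hli 1 0.
    * apply: functional_extensionality => i; apply: functional_extensionality => j.
      apply: quat_eq; case: i => [[|[|[|i]]] Hi]; case: j => [[|[|[|j]]] Hj];
        rewrite /matX /matY /=; ring.
    * move=> /eqP; rewrite oner_eq0 //.
  + subst d.
    have ac : qmul (qopp (qconj a)) c = qzero R.
      move: (congr1 (@q0 R) e2) (congr1 (@q1 R) e2) (congr1 (@q2 R) e2) (congr1 (@q3 R) e2) => /=.
      move=> h0 h1 h2 h3; apply: quat_eq => /=.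
      - by apply: eq_trans _ h0; ring.
      - by apply: eq_trans _ h1; ring.
      - by apply: eq_trans _ h2; ring.
      - by apply: eq_trans _ h3; ring.
    case: (@qmul_eq0 R _ _ ac) => [a0|c0].
    * split => //.
      move: (congr1 (@q0 R) a0) (congr1 (@q1 R) a0) (congr1 (@q2 R) a0) (congr1 (@q3 R) a0) => /=.
      move=> h0 h1 h2 h3; apply: quat_eq => /=; lra.
    * subst c.
      have [] := hli 0 1.
      -- apply: functional_extensionality => i; apply: functional_extensionality => j.
         apply: quat_eq; case: i => [[|[|[|i]]] Hi]; case: j => [[|[|[|j]]] Hj];
           rewrite /matX /matY /=; ring.
      -- move=> _ /eqP; rewrite oner_eq0 //.
- move=> [-> ->].
  apply: functional_extensionality => i; apply: functional_extensionality => j.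
  apply: quat_eq; case: i => [[|[|[|i]]] Hi]; case: j => [[|[|[|j]]] Hj];
  rewrite /qbracket /qmat_sub /qmat_mul !big_ord_recl big_ord0 /matX /matY /=; ring.
Qed.
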